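(* Let $G$ be a compact Hausdorff topological group and $p\colon E\to B$ a $G$-map of Hausdorff $G$-spaces. If $B$ is $G$-connected and $E^G\neq\emptyset$, then $\mathrm{secat}_G(p)\le\mathrm{cat}_G(B)$.
   Context: $X^H=\{x: hx=x\ \forall h\in H\}$; $X$ is $G$-connected if $X^H$ is path-connected for every closed subgroup $H\le G$. A $G$-homotopy is an equivariant homotopy with $G$ acting trivially on $I$. An invariant set $U\subseteq B$ is $G$-categorical if its inclusion is $G$-homotopic to a map with values in a single orbit; $\mathrm{cat}_G(B)$ is the least $k$ such that $B$ is covered by $k$ open $G$-categorical sets. $\mathrm{secat}_G(p)$ is the least $k$ such that $B$ is covered by $k$ invariant open sets $U_i$ each admitting a $G$-map $s\colon U_i\to E$ with $ps$ $G$-homotopic to the inclusion $U_i\hookrightarrow B$ ($\infty$ if none). *)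

(* Defs.v *)
From HB Require Import structures.
From mathcomp Require Import all_boot all_order all_algebra.
From mathcomp Require Import all_classical all_reals all_analysis.
From mathcomp Require Import Rstruct Rstruct_topology.

Set Implicit Arguments.
Unset Strict Implicit.
Unset Printing Implicit Defensive.

Import Order.TTheory GRing.Theory Num.Theory.
Local Open Scope classical_set_scope.
Local Open Scope ring_scope.

Definition unitI : set Rdefinitions.R := `[0%R, 1%R].

Definition is_topological_group (G : topologicalType)
  (mul : G -> G -> G) (inv : G -> G) (e : G) : Prop :=
  [/\ (forall a b c, mul a (mul b c) = mul (mul a b) c),
      (forall a, mul e a = a /\ mul a e = a),
      (forall a, mul (inv a) a = e /\ mul a (inv a) = e),
      continuous (fun q : G * G => mul q.1 q.2) &
      continuous inv].

Definition is_G_action (G : topologicalType) (mul : G -> G -> G) (e : G)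
  (X : topologicalType) (act : G -> X -> X) : Prop :=
  [/\ (forall x, act e x = x),
      (forall g h x, act g (act h x) = act (mul g h) x) &
      continuous (fun q : G * X => act q.1 q.2)].

Definition closed_subgroup (G : topologicalType) (mul : G -> G -> G)
  (inv : G -> G) (e : G) (H : set G) : Prop :=
  [/\ closed H, H e,
      (forall a b, H a -> H b -> H (mul a b)) &
      (forall a, H a -> H (inv a))].

Definition fixpts (G X : Type) (act : G -> X -> X) (H : set G) : set X :=
  [set x | forall h, H h -> act h x = x].

Definition path_connected (X : topologicalType) (A : set X) : Prop :=
  forall x y, A x -> A y ->
  exists gam : Rdefinitions.R -> X,
    [/\ {within unitI, continuous gam}, gam 0%R = x, gam 1%R = y &
        forall t, unitI t -> A (gam t)].

Definition G_connected (G : topologicalType) (mul : G -> G -> G)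
  (inv : G -> G) (e : G) (X : topologicalType) (act : G -> X -> X) : Prop :=
  forall H, closed_subgroup mul inv e H -> path_connected (fixpts act H).

Definition invariant (G X : Type) (act : G -> X -> X) (U : set X) : Prop :=
  forall g x, U x -> U (act g x).

Definition G_map_on (G : Type) (X Y : topologicalType)
  (actX : G -> X -> X) (actY : G -> Y -> Y) (U : set X) (f : X -> Y) : Prop :=
  {within U, continuous f} /\
  (forall g x, U x -> f (actX g x) = actY g (f x)).

Definition G_homotopic_on (G : Type) (X Y : topologicalType)
  (actX : G -> X -> X) (actY : G -> Y -> Y) (U : set X) (f0 f1 : X -> Y)
  : Prop :=
  exists Hm : X * Rdefinitions.R -> Y,
    [/\ {within U `*` unitI, continuous Hm},
        (forall x, U x -> Hm (x, 0%R) = f0 x),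
        (forall x, U x -> Hm (x, 1%R) = f1 x) &
        (forall g x t, U x -> unitI t -> Hm (actX g x, t) = actY g (Hm (x, t)))].

Definition orbit (G X : Type) (act : G -> X -> X) (x : X) : set X :=
  [set act g x | g in [set: G]].

Definition G_categorical (G : Type) (X : topologicalType)
  (act : G -> X -> X) (U : set X) : Prop :=
  invariant act U /\
  exists (f : X -> X) (x0 : X),
    G_homotopic_on act act U id f /\ (forall x, U x -> orbit act x0 (f x)).

Definition G_sectional (G : Type) (E B : topologicalType)
  (actE : G -> E -> E) (actB : G -> B -> B) (p : E -> B) (U : set B) : Prop :=
  invariant actB U /\
  exists s : B -> E, G_map_on actB actE U s /\
    G_homotopic_on actB actB U (p \o s) id.

Definition open_cover_by (X : topologicalType) (P : set X -> Prop) (k : nat)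
  : Prop :=
  exists U : nat -> set X,
    (forall i, (i < k)%N -> open (U i) /\ P (U i)) /\
    (forall x, exists2 i, (i < k)%N & U i x).

(* Least natural number satisfying P, or None (= infinity) if none does. *)
Definition least_nat (P : nat -> Prop) : option nat :=
  match pselect (exists n, P n) with
  | left h =>
      Some (@ex_minn (fun n => `[< P n >])
              (let: ex_intro n hn := h in ex_intro _ n (asboolT hn)))
  | right _ => None
  end.

Definition le_ext (a b : option nat) : Prop :=
  match a, b with
  | _, None => True
  | None, Some _ => False
  | Some m, Some n => (m <= n)%N
  end.

Definition catG (G : Type) (X : topologicalType) (act : G -> X -> X)
  : option nat :=
  least_nat (open_cover_by (G_categorical act)).

Definition secatG (G : Type) (E B : topologicalType)
  (actE : G -> E -> E) (actB : G -> B -> B) (p : E -> B) : option nat :=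
  least_nat (open_cover_by (G_sectional actE actB p)).

(* Main.v *)
Require Import Defs.
From mathcomp Require Import all_boot all_order all_algebra.
From mathcomp Require Import all_classical all_reals all_analysis.
Local Open Scope classical_set_scope.
From mathcomp Require Import Rstruct Rstruct_topology lra.
Import Order.TTheory GRing.Theory Num.Theory.

Definition relcont {T U : topologicalType} (A : set T) (f : T -> U) :=
  forall C, closed C -> exists2 V, closed V & V `&` A = f @^-1` C `&` A.

Lemma relcontP {T U : topologicalType} (A : set T) (f : T -> U) : {within A, continuous f} <-> relcont A f.
Proof.
split.
- move=> /continuous_closedP h C cC; have := h C cC; move/closed_subspaceP; done.
- move=> h; apply/continuous_closedP => C cC; apply/closed_subspaceP; exact: h.
Qed.

Lemma relcont_comp {T U V : topologicalType} (A : set T) (A' : set U) (f : T -> U)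
  (h : U -> V) :
  relcont A f -> (forall x, A x -> A' (f x)) -> relcont A' h ->
  relcont A (h \o f).
Proof.
move=> cf fA ch C cC; have [W cW hW] := ch C cC; have [V0 cV fV] := cf W cW.
exists V0 => //; rewrite fV; apply/seteqP; split=> x [] /= H1 H2; split => //.
- have : (W `&` A') (f x) by split => //; apply: fA.
  by rewrite hW => -[].
- have : (h @^-1` C `&` A') (f x) by split => //; apply: fA.
  by rewrite -hW => -[].
Qed.

Lemma relcont_paste {T U : topologicalType} (A P Q : set T) (f : T -> U) : closed P -> closed Q ->
  relcont (A `&` P) f -> relcont (A `&` Q) f -> relcont (A `&` (P `|` Q)) f.
Proof.
move=> cP cQ h1 h2 C cC; have [V1 c1 e1] := h1 C cC; have [V2 c2 e2] := h2 C cC.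
exists ((V1 `&` P) `|` (V2 `&` Q)); first by apply: closedU; exact: closedI.
apply/seteqP; split=> x.
- case=> -[[V1x Px]|[V2x Qx]] [Ax _].
  + have : (V1 `&` (A `&` P)) x by [].
    by rewrite e1 => -[? _]; split => //; split => //; left.
  + have : (V2 `&` (A `&` Q)) x by [].
    by rewrite e2 => -[? _]; split => //; split => //; right.
- case=> fx [Ax [Px|Qx]].
  + have : (f @^-1` C `&` (A `&` P)) x by [].
    by rewrite -e1 => -[? _]; split; [left|split => //; left].
  + have : (f @^-1` C `&` (A `&` Q)) x by [].
    by rewrite -e2 => -[? _]; split; [right|split => //; right].
Qed.

Lemma relcont_eq {T U : topologicalType} (A : set T) (f g : T -> U) : relcont A f -> (forall x, A x -> f x = g x) ->
  relcont A g.
Proof.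
move=> h e C cC; have [V cV eV] := h C cC; exists V => //; rewrite eV.
by apply/seteqP; split=> x [/= H1 H2]; split => //=; rewrite ?e// -?e.
Qed.

Lemma relcont_sub {T U : topologicalType} (A B : set T) (f : T -> U) : relcont A f -> B `<=` A -> relcont B f.
Proof.
move=> /relcontP h BA; apply/relcontP; exact: continuous_subspaceW h.
Qed.

Lemma relcont_cont {T U : topologicalType} (A : set T) (f : T -> U) : continuous f -> relcont A f.
Proof. by move=> h; apply/relcontP; apply: continuous_subspaceT. Qed.


Lemma within_pair {T U V : topologicalType} (A : set T) (f : T -> U) (g : T -> V) :
  {within A, continuous f} -> {within A, continuous g} ->
  {within A, continuous (fun x => (f x, g x))}.
Proof. move=> cf cg x; apply: cvg_pair.
  - have := cf x. done.
  - have := cg x. done.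
Qed.

Lemma within_compc {T U V : topologicalType} (A : set T) (f : T -> U) (g : U -> V) :
  {within A, continuous f} -> continuous g -> {within A, continuous (g \o f)}.
Proof. move=> cf cg x.
  exact: (@continuous_comp (subspace A) U V (from_subspace A f) g x (cf x) (cg _)).
Qed.

Lemma fst_cont {T U : topologicalType} : continuous (@fst T U).
Proof. by move=> x; exact: cvg_fst. Qed.
Lemma snd_cont {T U : topologicalType} : continuous (@snd T U).
Proof. by move=> x; exact: cvg_snd. Qed.

Lemma nbhs_setXT {X Y : topologicalType} (p : X * Y) (A : set X) :
  nbhs p.1 A -> nbhs p (A `*` [set: Y]).
Proof. by move=> nA; exists (A, setT) => //; split => //; exact: filterT. Qed.

Lemma nbhs_setTX {X Y : topologicalType} (p : X * Y) (A : set Y) :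
  nbhs p.2 A -> nbhs p ([set: X] `*` A).
Proof. by move=> nA; exists (setT, A) => //; split => //; exact: filterT. Qed.

Lemma prod_hausdorff {X Y : topologicalType} :
  hausdorff_space X -> hausdorff_space Y -> hausdorff_space (X * Y)%type.
Proof.
move=> hX hY [x1 y1] [x2 y2] cl; congr (_, _).
- apply: hX => A B nA nB.
  have [[a b] [[Aa _] [Ba _]]] := cl (A `*` setT) (B `*` setT)
    (nbhs_setXT (x1, y1) _ nA) (nbhs_setXT (x2, y2) _ nB).
  by exists a.
- apply: hY => A B nA nB.
  have [[a b] [[_ Aa] [_ Ba]]] := cl (setT `*` A) (setT `*` B)
    (nbhs_setTX (x1, y1) _ nA) (nbhs_setTX (x2, y2) _ nB).
  by exists b.
Qed.

Lemma cont_pair {T U V : topologicalType} (f : T -> U) (g : T -> V) :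
  continuous f -> continuous g -> continuous (fun x => (f x, g x)).
Proof. by move=> cf cg x; apply: cvg_pair; [exact: cf|exact: cg]. Qed.
Local Open Scope ring_scope.

Lemma unitIP (t : Rdefinitions.R) : unitI t <-> (0 <= t <= 1).
Proof. by rewrite /unitI /= in_itv. Qed.

Lemma affine_cont {X : topologicalType} (a b : Rdefinitions.R) :
  continuous (fun q : X * Rdefinitions.R => a - b * q.2).
Proof.
move=> q.
apply: (@continuousB Rdefinitions.R Rdefinitions.R^o (X * Rdefinitions.R)%type (fun _ => a) (fun q => b * q.2) q).
 exact: cst_continuous.
apply: (@continuousM Rdefinitions.R (X * Rdefinitions.R)%type (fun _ => b) (fun q => q.2) q).
 exact: cst_continuous.
exact: snd_cont.
Qed.

Lemma least_nat_mono (P Q : nat -> Prop) : (forall n, P n -> Q n) ->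
  le_ext (least_nat Q) (least_nat P).
Proof.
move=> PQ; rewrite /least_nat.
case: (pselect (exists n, P n)) => [hP|]; last by case: pselect.
case: pselect => [hQ|hQ]; last first.
  by exfalso; apply: hQ; case: hP => n /PQ; exists n.
rewrite /le_ext.
case: ex_minnP => m _ minm.
case: ex_minnP => k /asboolP Pk _.
by apply: minm; apply/asboolP; exact: PQ.
Qed.
Lemma sectional_of_cat (G : topologicalType) (mul : G -> G -> G) (inv : G -> G) (e : G)
  (E B : topologicalType) (actE : G -> E -> E) (actB : G -> B -> B) (p : E -> B) :
  is_topological_group mul inv e ->
  compact [set: G] ->
  is_G_action mul e actB ->
  hausdorff_space B ->
  (forall g x, p (actE g x) = actB g (p x)) ->
  G_connected mul inv e actB ->
  fixpts actE [set: G] !=set0 ->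
  forall U, G_categorical actB U -> G_sectional actE actB p U.
Proof.
move=> [mulA mul1 mulV _ _] cG [act1 actM cB] hB peq Gc [e0 He0] U.
move=> [invU [f [x0 [[Hm [cHm H0 H1 Heq]] fO]]]].
pose b0 := p e0.
have b0fix : forall g, actB g b0 = b0.
  by move=> g; rewrite /b0 -peq He0.
pose Stab := [set g | actB g x0 = x0].
have cont_orb : continuous (fun g => actB g x0).
  move=> g.
  apply: (@continuous_comp _ _ _ (fun g => (g, x0)) (fun q => actB q.1 q.2)).
  - by apply: cvg_pair; [exact: cvg_id | exact: cvg_cst].
  - exact: cB.
have SC : closed_subgroup mul inv e Stab.
  split.
  - have -> : Stab = (fun g => actB g x0) @^-1` [set x0] by [].
    move: (cont_orb) => /continuous_closedP; apply.
    exact: accessible_closed_set1 (hausdorff_accessible hB) x0.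
  - exact: act1.
  - by move=> a b Ha Hb; rewrite /Stab /= -actM Hb Ha.
  - by move=> a Ha; rewrite /Stab /= -{1}Ha actM (mulV a).1 act1.
have [gam [cgam g0 g1 gS]] : exists gam : Rdefinitions.R -> B,
    [/\ {within unitI, continuous gam}, gam 0%R = x0, gam 1%R = b0 &
        forall t, unitI t -> fixpts actB Stab (gam t)].
  apply: (Gc Stab SC x0 b0) => //.
pose gof (y : B) : G :=
  if pselect (exists g, actB g x0 = y) is left h then projT1 (cid h) else e.
have gofP : forall g, actB (gof (actB g x0)) x0 = actB g x0.
  move=> g; rewrite /gof; case: pselect => [h|[]]; last by exists g.
  by case: (cid h).
pose Phi (q : B * Rdefinitions.R) := actB (gof q.1) (gam q.2).
have KL : forall g s, unitI s -> Phi (actB g x0, s) = actB g (gam s).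
  move=> g s Is; rewrite /Phi /=.
  have kP := gofP g.
  move: kP; set k := gof (actB g x0) => kP.
  have hS : Stab (mul (inv g) k).
    by rewrite /Stab /= -actM kP actM (mulV g).1 act1.
  have -> : k = mul g (mul (inv g) k) by rewrite mulA (mulV g).2 (mul1 k).1.
  by rewrite -actM (gS s Is _ hS).
have I0 : unitI 0 by apply/unitIP; lra.
have I1 : unitI 1 by apply/unitIP; lra.
have Phieq : forall g y s, Defs.orbit actB x0 y -> unitI s ->
    Phi (actB g y, s) = actB g (Phi (y, s)).
  move=> g y s [k _ <-] Is.
  by rewrite actM (KL _ _ Is) (KL _ _ Is) actM.
have Phi0 : forall y, Defs.orbit actB x0 y -> Phi (y, 0) = y.
  by move=> y [k _ <-]; rewrite (KL _ _ I0) g0.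
have Phi1 : forall y, Defs.orbit actB x0 y -> Phi (y, 1) = b0.
  by move=> y [k _ <-]; rewrite (KL _ _ I1) g1 b0fix.
have cPhi : relcont (Defs.orbit actB x0 `*` unitI) Phi.
  move=> C cC.
  pose Psi (q : G * Rdefinitions.R) := actB q.1 (gam q.2).
  have cPsi : relcont ([set: G] `*` unitI) Psi.
    apply/relcontP.
    have -> : Psi = (fun q => actB q.1 q.2) \o (fun q => (q.1, gam q.2)) by [].
    apply: within_compc; last exact: cB.
    apply: within_pair; first by apply: continuous_subspaceT; exact: fst_cont.
    apply/relcontP.
    have -> : (fun q : G * Rdefinitions.R => gam q.2) = gam \o snd by [].
    apply: (@relcont_comp _ _ _ _ unitI); first by apply: relcont_cont; exact: snd_cont.
    - by move=> q [].
    - by apply/relcontP.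
  have [V cV eV] := cPsi C cC.
  pose pi (q : G * Rdefinitions.R) := (actB q.1 x0, q.2).
  exists (pi @` (V `&` ([set: G] `*` unitI))).
  - apply: compact_closed; first exact: prod_hausdorff hB (@Rhausdorff _).
    apply: continuous_compact.
    + apply: continuous_subspaceT; apply: cont_pair; last exact: snd_cont.
      move=> q.
      exact: (@continuous_comp _ _ _ fst (fun g => actB g x0) q (@fst_cont _ _ q) (cont_orb _)).
    + rewrite setIC; apply: compact_closedI => //; apply: compact_setX => //.
      exact: segment_compact.
  - apply/seteqP; split => q.
    + move=> [[[g t] [Vgt [_ It]] <-] Oq]; split => //.
      rewrite /= KL //.
      have : (V `&` ([set: G] `*` unitI)) (g, t) by [].
      by rewrite eV => -[].
    + case: q => y s [/= Cp [[k _ ky] Is]]; split; last by split => //; exists k.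
      exists (k, s); last by rewrite /pi /= ky.
      have : (Psi @^-1` C `&` ([set: G] `*` unitI)) (k, s).
        by split => //; rewrite /Psi /= -KL // ky.
      by rewrite -eV.
have fE : forall x, U x -> f x = Hm (x, 1) by move=> x Ux; rewrite H1.
pose Dh (q : B * Rdefinitions.R) :=
  if q.2 <= 2^-1 then Phi (f q.1, 1 - 2 * q.2) else Hm (q.1, 2 - 2 * q.2).
split => //; exists (fun _ => e0); split.
  split; first by apply: continuous_subspaceT; exact: cst_continuous.
  by move=> g x _; rewrite He0.
exists Dh; split.
- apply/relcontP.
  have -> : U `*` unitI = (U `*` unitI) `&`
      ([set q | q.2 <= 2^-1] `|` [set q | 2^-1 <= q.2]).
    apply/seteqP; split => q; last by case.
    by move=> Hq; split => //; case: (lerP q.2 2^-1) => h; [left|right; apply: ltW].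
  apply: relcont_paste.
  + have -> : [set q : B * Rdefinitions.R | q.2 <= 2^-1] =
        snd @^-1` [set x : Rdefinitions.R | x <= 2^-1] by [].
    apply: (proj1 (continuous_closedP snd) (@snd_cont B Rdefinitions.R)).
    exact: closed_le.
  + have -> : [set q : B * Rdefinitions.R | 2^-1 <= q.2] =
        snd @^-1` [set x : Rdefinitions.R | 2^-1 <= x] by [].
    apply: (proj1 (continuous_closedP snd) (@snd_cont B Rdefinitions.R)).
    exact: closed_ge.
  + apply: (@relcont_eq _ _ _ (Phi \o (fun q => (Hm (q.1, 1), 1 - 2 * q.2)))).
    * apply: relcont_comp cPhi.
      -- apply/relcontP; apply: within_pair; last first.
           by apply: continuous_subspaceT; exact: affine_cont.
         apply/relcontP.
         apply: (@relcont_comp _ _ _ _ (U `*` unitI) (fun q => (q.1, 1)) Hm).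
         ++ apply: relcont_cont; apply: cont_pair; first exact: fst_cont.
            exact: cst_continuous.
         ++ by move=> q [[Uq _] _].
         ++ by apply/relcontP.
      -- move=> [x t] [[/= Ux /unitIP It] /= ht]; split => /=.
           by rewrite -fE //; exact: fO.
         by apply/unitIP; lra.
    * move=> [x t] [[/= Ux _] /= ht].
      by rewrite /Dh /= ht fE.
  + apply: (@relcont_eq _ _ _ (Hm \o (fun q => (q.1, 2 - 2 * q.2)))).
    * apply: (@relcont_comp _ _ _ _ (U `*` unitI)).
      -- apply: relcont_cont; apply: cont_pair; first exact: fst_cont.
         exact: affine_cont.
      -- move=> [x t] [[/= Ux /unitIP It] /= ht]; split => //=.
         by apply/unitIP; lra.
      -- by apply/relcontP.
    * move=> [x t] [[/= Ux _] /= ht].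
      rewrite /Dh /=; case: ifP => // h2.
      have -> : t = 2^-1 by apply/eqP; rewrite eq_le h2 ht.
      have -> : 1 - 2 * 2^-1 = (0 : Rdefinitions.R) by lra.
      have -> : 2 - 2 * 2^-1 = (1 : Rdefinitions.R) by lra.
      rewrite Phi0; [exact: (esym (fE x Ux)) | exact: (fO x Ux)].
- move=> x Ux; rewrite /Dh /=.
  have -> : (0 : Rdefinitions.R) <= 2^-1 = true by apply/idP; lra.
  have -> : 1 - 2 * 0 = (1 : Rdefinitions.R) by lra.
  by rewrite Phi1 //; exact: fO.
- move=> x Ux; rewrite /Dh /=.
  have -> : (1 : Rdefinitions.R) <= 2^-1 = false by apply/negbTE; rewrite -ltNge; lra.
  have -> : 2 - 2 * 1 = (0 : Rdefinitions.R) by lra.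
  by rewrite H0.
- move=> g x t Ux /[dup] It /unitIP It'; rewrite /Dh /=.
  case: ifP => ht.
  + have fg : f (actB g x) = actB g (f x).
      rewrite (fE _ (invU g x Ux)) (fE _ Ux); exact: (Heq g x 1 Ux I1).
    rewrite fg; apply: Phieq; first exact: (fO x Ux).
    by apply/unitIP; lra.
  + rewrite Heq //; apply/unitIP.
    move/negbT: ht; rewrite -ltNge => ht; lra.
Qed.

Theorem proposition4p4
  (G : topologicalType) (mul : G -> G -> G) (inv : G -> G) (e : G)
  (E B : topologicalType) (actE : G -> E -> E) (actB : G -> B -> B)
  (p : E -> B) :
  is_topological_group mul inv e ->
  compact [set: G] -> hausdorff_space G ->
  is_G_action mul e actE -> is_G_action mul e actB ->
  hausdorff_space E -> hausdorff_space B ->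
  continuous p -> (forall g x, p (actE g x) = actB g (p x)) ->
  G_connected mul inv e actB ->
  fixpts actE [set: G] !=set0 ->
  le_ext (secatG actE actB p) (catG actB).
Proof.
move=> TG cG _ _ AB _ hB _ peq Gc fix0.
rewrite /secatG /catG; apply: least_nat_mono => n [V [HV cov]].
exists V; split => // i hi; have [oV cV] := HV i hi; split => //.
exact: (@sectional_of_cat G mul inv e E B actE actB p TG cG AB hB peq Gc fix0 (V i) cV).
Qed.
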